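(* Let $\gamma<1$, $\gamma\neq 0$. The following two conditions are equivalent. (A) For all $\gamma'\in(\gamma,1)$, $$\lim_{x\uparrow\infty}\frac{u_0'(x)}{x^{\gamma'-1}}=0,$$ and for all $\gamma''<\gamma$, $$\lim_{x\uparrow\infty}\frac{u_0'(x)}{x^{\gamma''-1}}=\infty.$$ (B) $u_0'$ varies regularly at infinity with exponent $\gamma-1$, i.e. for all $k>0$, $$\lim_{x\uparrow\infty}\frac{u_0'(kx)}{u_0'(x)}=k^{\gamma-1}.$$
   Context: Let $\mu$ be a nonzero finite positive Borel measure on $(0,\infty)$ such that $\int y e^{yz}\mu(dy)<\infty$ for every $z\in\mathbb{R}$. Define $h(z,t):=\int e^{yz-\frac12 y^2 t}\mu(dy)$ for $(z,t)\in\mathbb{R}\times[0,\infty)$. Let $u:(0,\infty)\times[0,\infty)\to\mathbb{R}$ be smooth, strictly increasing and strictly concave in $x$, solving $u_t=\frac12 u_x^2/u_{xx}$, and related to $h$ by $u_x(h(z,t),t)=e^{-z+t/2}$ for all $(z,t)$. Write $u_0(x):=u(x,0)$; its derivative $u_0'$ is positive. *)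

(* Defs.v *)
From HB Require Import structures.
From mathcomp Require Import all_boot all_order all_algebra.
From mathcomp Require Import all_classical all_reals all_analysis.
Set Implicit Arguments. Unset Strict Implicit. Unset Printing Implicit Defensive.
Import Order.TTheory GRing.Theory Num.Theory.
Import numFieldNormedType.Exports.
Local Open Scope classical_set_scope.
Local Open Scope ring_scope.

Definition hfun {R : realType} (mu : {measure set R -> \bar R}) (z t : R) : R :=
  fine (\int[mu]_(y in `]0%R, +oo[) (expR (y * z - y ^+ 2 * t / 2))%:E)%E.

Definition ux {R : realType} (u : R -> R -> R) (x t : R) : R :=
  derive1 (fun x' => u x' t) x.
Definition uxx {R : realType} (u : R -> R -> R) (x t : R) : R :=
  derive1 (fun x' => ux u x' t) x.
Definition ut {R : realType} (u : R -> R -> R) (x t : R) : R :=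
  derive1 (fun t' => u x t') t.

Definition u0' {R : realType} (u : R -> R -> R) (x : R) : R := ux u x 0.

Definition strictly_increasing_on_pos {R : realType} (f : R -> R) : Prop :=
  forall x y : R, 0 < x -> x < y -> f x < f y.

Definition strictly_concave_on_pos {R : realType} (f : R -> R) : Prop :=
  forall (x y l : R), 0 < x -> 0 < y -> x != y -> 0 < l -> l < 1 ->
    l * f x + (1 - l) * f y < f (l * x + (1 - l) * y).

(* Main.v *)
Require Import Defs.
From HB Require Import structures.
From mathcomp Require Import all_boot all_order all_algebra.
From mathcomp Require Import all_classical all_reals all_analysis.
From mathcomp Require Import ring lra.
From mathcomp Require Import measurable_realfun.
Import Order.TTheory GRing.Theory Num.Theory.
Import numFieldNormedType.Exports.
Local Open Scope classical_set_scope.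
Local Open Scope ring_scope.

Definition concaveC {R : realType} (g : R -> R) : Prop :=
  forall s t u, s < t -> t < u -> (u - t) * g s + (t - s) * g u <= (u - s) * g t.

Lemma Dmono {R : realType} (g : R -> R) : concaveC g ->
  forall c s1 s2, 0 < c -> s1 <= s2 -> g (s2 + c) - g s2 <= g (s1 + c) - g s1.
Proof.
move=> Hc c s1 s2 c0; rewrite le_eqVlt => /orP[/eqP->//|lt12].
have h1 := Hc s1 (s1 + c) (s2 + c) ltac:(lra) ltac:(lra).
have h2 := Hc s1 s2 (s2 + c) ltac:(lra) ltac:(lra).
set L := s2 - s1.
have L0 : 0 < L + c by rewrite /L; lra.
rewrite -(ler_pM2l L0).
have e1 : s2 + c - (s1 + c) = L by rewrite /L; lra.
have e2 : s1 + c - s1 = c by lra.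
have e3 : s2 + c - s1 = L + c by rewrite /L; lra.
have e4 : s2 + c - s2 = c by lra.
have e5 : s2 - s1 = L by [].
rewrite e1 e2 e3 in h1; rewrite e3 e4 e5 in h2.
nra.
Qed.

Lemma D1_ge {R : realType} {g : R -> R} {a : R} : concaveC g ->
  (g (s + 1) - g s) @[s --> +oo] --> a -> forall s0, a <= g (s0 + 1) - g s0.
Proof.
move=> Hc HB s0; rewrite leNgt; apply/negP => H.
have e0 : 0 < a - (g (s0 + 1) - g s0) by lra.
move/cvgrPdist_lt: HB => /(_ _ e0) He.
have : \forall s \near +oo, s0 <= s /\ `|a - (g (s + 1) - g s)| < a - (g (s0 + 1) - g s0).
  near=> s; split; [near: s; apply: nbhs_pinfty_ge; exact: num_real | near: s; exact: He].
case/filter_ex => s [H1 H2].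
have := @Dmono _ g Hc 1 s0 s ltr01 H1.
have := ler_norm (a - (g (s + 1) - g s)).
lra.
Unshelve. all: by end_near.
Qed.

Lemma BA1 {R : realType} {g : R -> R} {a : R} : concaveC g ->
  (g (s + 1) - g s) @[s --> +oo] --> a ->
  forall b, 0 < b -> b < a -> (b * s - g s) @[s --> +oo] --> -oo.
Proof.
move=> Hc HB b b0 ba; apply/cvgrNyPle => A.
set K := (- A - g 0) / (a - b).
have hK : K * (a - b) = - A - g 0 by rewrite /K; field; lra.
near=> s.
have s1 : 1 < s by near: s; apply: nbhs_pinfty_gt; exact: num_real.
have sK : K <= s by near: s; apply: nbhs_pinfty_ge; exact: num_real.
have h := Hc 0 (s - 1) s ltac:(lra) ltac:(lra).
have h2 := D1_ge Hc HB (s - 1).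
rewrite subrK in h2.
have e1 : s - (s - 1) = 1 by lra.
rewrite e1 !subr0 mul1r in h.
have h3 : s * a <= s * (g s - g (s - 1)) by rewrite ler_pM2l //; lra.
have h4 : K * (a - b) <= s * (a - b) by rewrite ler_pM2r //; lra.
nra.
Unshelve. all: by end_near.
Qed.

Lemma BA2 {R : realType} {g : R -> R} {a : R} : concaveC g ->
  (g (s + 1) - g s) @[s --> +oo] --> a ->
  forall b, a < b -> (b * s - g s) @[s --> +oo] --> +oo.
Proof.
move=> Hc HB b ab; apply/cvgryPge => A.
set e := (b - a) / 2.
have e0 : 0 < e by rewrite /e; lra.
move/cvgrPdist_lt: HB => /(_ _ e0) /filter_ex [S HS].
have HS' : g (S + 1) - g S < a + e.
  have := ler_norm (a - (g (S + 1) - g S)).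
  rewrite distrC in HS. have := ler_norm ((g (S + 1) - g S) - a). lra.
set K := (A - (a + e) * S + g S) / e.
have hK : K * e = A - (a + e) * S + g S by rewrite /K; field; lra.
near=> s.
have s1 : S + 1 < s by near: s; apply: nbhs_pinfty_gt; exact: num_real.
have sK : K <= s by near: s; apply: nbhs_pinfty_ge; exact: num_real.
have h := Hc S (S + 1) s ltac:(lra) ltac:(lra).
have e1 : S + 1 - S = 1 by lra.
rewrite e1 mul1r in h.
have h3 : (s - S) * (g (S + 1) - g S) <= (s - S) * (a + e) by rewrite ler_pM2l; lra.
have h4 : K * e <= s * e by rewrite ler_pM2r //; lra.
have eb : b = a + e + e by rewrite /e; lra.
nra.
Unshelve. all: by end_near.
Qed.

Lemma ABlow {R : realType} {g : R -> R} {a : R} : concaveC g ->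
  (forall s1 s2, s1 <= s2 -> g s1 <= g s2) -> 0 < a ->
  (forall b, 0 < b -> b < a -> (b * s - g s) @[s --> +oo] --> -oo) ->
  forall c s0, 0 < c -> a * c <= g (s0 + c) - g s0.
Proof.
move=> Hc Hm a0 HA1 c s0 c0; rewrite leNgt; apply/negP => H.
set D := g (s0 + c) - g s0 in H.
have D0 : 0 <= D by rewrite /D subr_ge0; apply: Hm; lra.
set d := D / c.
have hd : d * c = D by rewrite /d; field; lra.
have d0 : 0 <= d by rewrite /d divr_ge0 //; lra.
have da : d < a by rewrite /d ltr_pdivrMr //; lra.
set b := (d + a) / 2.
have b0 : 0 < b by rewrite /b; lra.
have ba : b < a by rewrite /b; lra.
have bd : d < b by rewrite /b; lra.
move/cvgrNyPle: (HA1 b b0 ba) => /(_ (d * s0 - g s0 - 1)) H1.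
have : \forall s \near +oo, s0 + c < s /\ 0 < s /\ b * s - g s <= d * s0 - g s0 - 1.
  near=> s; split; [|split].
  - near: s; apply: nbhs_pinfty_gt; exact: num_real.
  - near: s; apply: nbhs_pinfty_gt; exact: num_real.
  - near: s; exact: H1.
case/filter_ex => s [s1 [s2 s3]].
have h := Hc s0 (s0 + c) s ltac:(lra) ltac:(lra).
have e1 : s0 + c - s0 = c by lra.
rewrite e1 in h.
have h2 : c * (g s - g s0 - (s - s0) * d) <= 0.
  have -> : c * (g s - g s0 - (s - s0) * d) = c * g s - c * g s0 - (s - s0) * D by rewrite -hd; ring.
  rewrite /D; nra.
have h3 : 0 < g s - g s0 - (s - s0) * d.
  have : 0 <= (b - d) * s by rewrite mulr_ge0 //; lra.
  nra.
have := mulr_gt0 c0 h3; lra.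
Unshelve. all: by end_near.
Qed.

Lemma ABup {R : realType} {g : R -> R} {a : R} : concaveC g -> 0 < a ->
  (forall b, a < b -> (b * s - g s) @[s --> +oo] --> +oo) ->
  forall c e, 0 < c -> 0 < e -> exists s0, g (s0 + c) - g s0 <= a * c + e.
Proof.
move=> Hc a0 HA2 c e c0 e0; apply: contrapT => Hn.
have Hn' : forall s0, a * c + e < g (s0 + c) - g s0.
  move=> s0; rewrite ltNge; apply/negP => H; apply: Hn; by exists s0.
set b := a + e / (2 * c).
have hb : c * b = a * c + e / 2 by rewrite /b; field; lra.
have ab : a < b.
  have : 0 < e / (2 * c) by apply: divr_gt0; lra.
  rewrite /b; lra.
move/cvgryPge: (HA2 b ab) => /(_ (- g 0 + 1)) H1.
have : \forall s \near +oo, c < s /\ - g 0 + 1 <= b * s - g s.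
  near=> s; split.
  - near: s; apply: nbhs_pinfty_gt; exact: num_real.
  - near: s; exact: H1.
case/filter_ex => s [s1 s2].
have h := Hc 0 (s - c) s ltac:(lra) ltac:(lra).
have e1 : s - (s - c) = c by lra.
rewrite e1 !subr0 in h.
have h2 := Hn' (s - c); rewrite subrK in h2.
have h3 : s * (a * c + e) <= s * (g s - g (s - c)) by rewrite ler_pM2l; lra.
have h4 : c * (b * s - (g s - g 0)) < c.
  have -> : c * (b * s - (g s - g 0)) = (c * b) * s - c * (g s - g 0) by ring.
  rewrite hb; nra.
have h5 : b * s - (g s - g 0) < 1.
  by rewrite -(ltr_pM2l c0) mulr1.
lra.
Unshelve. all: by end_near.
Qed.

Lemma ABpos {R : realType} {g : R -> R} {a : R} : concaveC g ->
  (forall s1 s2, s1 <= s2 -> g s1 <= g s2) -> 0 < a ->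
  (forall b, 0 < b -> b < a -> (b * s - g s) @[s --> +oo] --> -oo) ->
  (forall b, a < b -> (b * s - g s) @[s --> +oo] --> +oo) ->
  forall c, 0 < c -> (g (s + c) - g s) @[s --> +oo] --> a * c.
Proof.
move=> Hc Hm a0 HA1 HA2 c c0; apply/cvgrPdist_le => e e0.
have [s0 Hs0] := ABup Hc a0 HA2 c e c0 e0.
near=> s.
have ss : s0 <= s by near: s; apply: nbhs_pinfty_ge; exact: num_real.
have h1 := @Dmono _ g Hc c s0 s c0 ss.
have h2 := ABlow Hc Hm a0 HA1 c s c0.
rewrite ler_norml; apply/andP; split; lra.
Unshelve. all: by end_near.
Qed.

Lemma AB {R : realType} {g : R -> R} {a : R} : concaveC g ->
  (forall s1 s2, s1 <= s2 -> g s1 <= g s2) -> 0 < a ->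
  (forall b, 0 < b -> b < a -> (b * s - g s) @[s --> +oo] --> -oo) ->
  (forall b, a < b -> (b * s - g s) @[s --> +oo] --> +oo) ->
  forall c, (g (s + c) - g s) @[s --> +oo] --> a * c.
Proof.
move=> Hc Hm a0 HA1 HA2 c.
have [c0|c0|<-] := ltgtP 0 c.
- exact: ABpos.
- have c0' : 0 < - c by lra.
  have H := ABpos Hc Hm a0 HA1 HA2 (- c) c0'.
  rewrite -(cvg_shiftr c) in H.
  have -> : a * c = - (a * - c) by ring.
  have -> : (fun s => g (s + c) - g s) = (fun s => - (g (s + c + - c) - g (s + c))).
    by apply: funext => s; rewrite addrK opprB.
  exact: cvgN H.
- have -> : (fun s => g (s + 0) - g s) = (fun=> 0).
    by apply: funext => s; rewrite addr0 subrr.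
  rewrite mulr0; exact: cvg_cst.
Unshelve. all: by end_near.
Qed.

Lemma expR_cvgy {R : realType} : (@expR R) s @[s --> +oo] --> +oo.
Proof.
apply/cvgryPge => A; near=> s.
have sA : A <= s by near: s; apply: nbhs_pinfty_ge; exact: num_real.
have := expR_ge1Dx s; lra.
Unshelve. all: by end_near.
Qed.

Lemma ln_cvgy {R : realType} : (@ln R) s @[s --> +oo] --> +oo.
Proof.
apply/cvgryPge => A; near=> s.
have sA : expR A <= s by near: s; apply: nbhs_pinfty_ge; exact: num_real.
have s0 : 0 < s by have := expR_gt0 A; lra.
rewrite -[X in X <= _]expRK ler_ln // posrE ?expR_gt0 //.
Unshelve. all: by end_near.
Qed.

Lemma L1 {R : realType} (F : R -> R) (L : set_system R) :
  F x @[x --> +oo] --> L <-> F (expR s) @[s --> +oo] --> L.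
Proof.
split => H.
- exact: (cvg_comp _ _ expR_cvgy H).
- have H2 := cvg_comp _ _ ln_cvgy H.
  apply: cvg_trans H2; apply: near_eq_cvg; near=> x => /=.
  have x0 : 0 < x by near: x; apply: nbhs_pinfty_gt; exact: num_real.
  by rewrite lnK // posrE.
Unshelve. all: by end_near.
Qed.


Lemma L2 {R : realType} (phi : R -> R) :
  expR (phi s) @[s --> +oo] --> 0 <-> phi s @[s --> +oo] --> -oo.
Proof.
split => H.
- apply/cvgrNyPle => A.
  move/cvgrPdist_lt: H => /(_ _ (expR_gt0 A)) H.
  near=> s.
  have hs : `|0 - expR (phi s)| < expR A by near: s; exact: H.
  rewrite sub0r normrN gtr0_norm ?expR_gt0 // ltr_expR in hs; lra.
- apply/cvgrPdist_lt => e e0.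
  move/cvgrNyPle: H => /(_ (ln e - 1)) H.
  near=> s.
  have hs : phi s <= ln e - 1 by near: s; exact: H.
  rewrite sub0r normrN gtr0_norm ?expR_gt0 //.
  rewrite -[e in _ < e]lnK ?posrE // ltr_expR; lra.
Unshelve. all: by end_near.
Qed.

Lemma L3 {R : realType} (phi : R -> R) :
  expR (phi s) @[s --> +oo] --> +oo <-> phi s @[s --> +oo] --> +oo.
Proof.
split => H; apply/cvgryPge => A.
- move/cvgryPge: H => /(_ (expR A)) H.
  near=> s.
  have hs : expR A <= expR (phi s) by near: s; exact: H.
  by rewrite ler_expR in hs.
- move/cvgryPge: H => /(_ A) H.
  near=> s.
  have hs : A <= phi s by near: s; exact: H.
  have := expR_ge1Dx (phi s); lra.
Unshelve. all: by end_near.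
Qed.

Lemma L4 {R : realType} (psi : R -> R) (m : R) :
  expR (psi s) @[s --> +oo] --> expR m <-> psi s @[s --> +oo] --> m.
Proof.
split => H.
- have H2 := cvg_comp _ _ H (continuous_ln (expR_gt0 m)).
  rewrite expRK in H2.
  have E : ((@ln R) \o (fun s => expR (psi s))) = psi by apply: funext => s /=; rewrite expRK.
  by rewrite E in H2.
- have H2 := cvg_comp _ _ H (@continuous_expR R m); exact: H2.
Qed.

Lemma der_cvg {R : realType} {U : R -> R} {x} : derivable U x 1 ->
  cvg ((fun h => h^-1 * (U (h + x) - U x)) @ 0^') /\
  derive1 U x = lim ((fun h => h^-1 * (U (h + x) - U x)) @ 0^').
Proof.
move=> H; split; last by [].
have E : (fun h : R => h^-1 *: ((U \o shift x) (h *: 1) - U x)) = (fun h => h^-1 * (U (h + x) - U x)).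
  apply: funext => h /=. change (h^-1 * (U (h * 1 + x) - U x) = h^-1 * (U (h + x) - U x)); by rewrite mulr1.
by rewrite -E.
Qed.

Lemma chordU {R : realType} {U : R -> R} : strictly_concave_on_pos U ->
  forall s t w, 0 < s -> s < t -> t < w ->
  (w - t) * U s + (t - s) * U w < (w - s) * U t.
Proof.
move=> Hs s t w s0 st tw.
set l := (w - t) / (w - s).
have l0 : 0 < l by rewrite /l divr_gt0 //; lra.
have l1 : l < 1 by rewrite /l ltr_pdivrMr; lra.
have sw : s != w by apply/negP => /eqP E; lra.
have := Hs s w l s0 ltac:(lra) sw l0 l1.
have -> : l * s + (1 - l) * w = t by rewrite /l; field; lra.
move=> H.
have : (w - s) * (l * U s + (1 - l) * U w) < (w - s) * U t by rewrite ltr_pM2l //; lra.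
have -> : (w - s) * (l * U s + (1 - l) * U w) = (w - t) * U s + (t - s) * U w.
  by rewrite /l; field; lra.
by [].
Qed.

Lemma slope_le_der {R : realType} {U : R -> R} : strictly_concave_on_pos U ->
  forall x y, 0 < x -> x < y -> derivable U x 1 ->
  (U y - U x) / (y - x) <= derive1 U x.
Proof.
move=> Hs x y x0 xy Hd.
have [Hcv ->] := der_cvg Hd.
apply: limr_ge => //.
have m0 : 0 < Num.min x (y - x) by rewrite lt_min x0 /=; lra.
near=> h.
have h0 : h != 0 by near: h; exact: nbhs_dnbhs_neq.
have hb : `|h| < Num.min x (y - x) by near: h; exact: dnbhs0_lt.
rewrite lt_min in hb; case/andP: hb => hb1 hb2.
rewrite [h^-1 * _]mulrC.
set S := (U y - U x) / (y - x).
have hS : S * (y - x) = U y - U x by rewrite /S; field; lra.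
have yx : 0 < y - x by lra.
have [hp|hn] := ltP 0 h.
- rewrite gtr0_norm // in hb1 hb2.
  have H := chordU Hs x (h + x) y x0 ltac:(lra) ltac:(lra).
  rewrite ler_pdivlMr // -(ler_pM2l yx).
  have -> : (y - x) * (S * h) = h * (U y - U x) by rewrite -hS; ring.
  nra.
- have hn' : h < 0 by rewrite lt_neqAle h0 hn.
  rewrite ltr0_norm // in hb1 hb2.
  have H := chordU Hs (h + x) x y ltac:(lra) ltac:(lra) xy.
  rewrite ler_ndivlMr // -(ler_pM2l yx).
  have -> : (y - x) * (S * h) = h * (U y - U x) by rewrite -hS; ring.
  nra.
Unshelve. all: by end_near.
Qed.

Lemma der_le_slope {R : realType} {U : R -> R} : strictly_concave_on_pos U ->
  forall x y, 0 < y -> y < x -> derivable U x 1 ->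
  derive1 U x <= (U x - U y) / (x - y).
Proof.
move=> Hs x y y0 yx Hd.
have [Hcv ->] := der_cvg Hd.
apply: limr_le => //.
have m0 : 0 < x - y by lra.
near=> h.
have h0 : h != 0 by near: h; exact: nbhs_dnbhs_neq.
have hb : `|h| < x - y by near: h; exact: dnbhs0_lt.
rewrite [h^-1 * _]mulrC.
set T := (U x - U y) / (x - y).
have hT : T * (x - y) = U x - U y by rewrite /T; field; lra.
have [hp|hn] := ltP 0 h.
- rewrite gtr0_norm // in hb.
  have H := chordU Hs y x (h + x) y0 yx ltac:(lra).
  rewrite ler_pdivrMr // -(ler_pM2l m0).
  have -> : (x - y) * (T * h) = h * (U x - U y) by rewrite -hT; ring.
  nra.
- have hn' : h < 0 by rewrite lt_neqAle h0 hn.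
  rewrite ltr0_norm // in hb.
  have H := chordU Hs y (h + x) x y0 ltac:(lra) ltac:(lra).
  rewrite ler_ndivrMr // -(ler_pM2l m0).
  have -> : (x - y) * (T * h) = h * (U x - U y) by rewrite -hT; ring.
  nra.
Unshelve. all: by end_near.
Qed.

Lemma der_strict_decr {R : realType} (U : R -> R) : strictly_concave_on_pos U ->
  (forall x, 0 < x -> derivable U x 1) ->
  forall x1 x2, 0 < x1 -> x1 < x2 -> derive1 U x2 < derive1 U x1.
Proof.
move=> Hs Hd x1 x2 x0 x12.
set m := (x1 + x2) / 2.
have mx1 : x1 < m by rewrite /m; lra.
have mx2 : m < x2 by rewrite /m; lra.
have h1 := slope_le_der Hs x1 m x0 mx1 (Hd _ x0).
have h2 := der_le_slope Hs x2 m (lt_trans x0 mx1) mx2 (Hd x2 ltac:(lra)).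
have h3 := Hs x1 x2 (1/2) x0 ltac:(lra) ltac:(apply/negP => /eqP E; lra) ltac:(lra) ltac:(lra).
have em : 1 / 2 * x1 + (1 - 1 / 2) * x2 = m by rewrite /m; field.
rewrite em in h3.
have e1 : m - x1 = (x2 - x1) / 2 by rewrite /m; field.
have e2 : x2 - m = (x2 - x1) / 2 by rewrite /m; field.
rewrite e1 in h1; rewrite e2 in h2.
set d := (x2 - x1) / 2 in h1 h2.
have d0 : 0 < d by rewrite /d; lra.
have : (U x2 - U m) / d < (U m - U x1) / d by rewrite ltr_pM2r ?invr_gt0 //; lra.
lra.
Qed.

Lemma mexp {R : realType} (z : R) :
  measurable_fun (`]0%R, +oo[ : set R) (fun y : R => (expR (y * z))%:E).
Proof.
apply/measurable_EFinP.
apply: measurableT_comp => //.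
exact: mulrr_measurable.
Qed.

Lemma intble_exp {R : realType} (mu : {finite_measure set R -> \bar R}) :
  (forall z : R, mu.-integrable `]0%R, +oo[ (fun y => (y * expR (y * z))%:E)) ->
  forall z : R, mu.-integrable `]0%R, +oo[ (fun y => (expR (y * z))%:E).
Proof.
move=> Hi z.
have Hg := integrableD (measurable_itv _) (finite_measure_integrable_cst mu (expR `|z|) (measurable_itv `]0%R, +oo[)) (Hi z).
eapply le_integrable; [exact: measurable_itv|exact: mexp| |exact: Hg].
move=> y /=; rewrite in_itv /= andbT => y0.
rewrite lee_fin (ger0_norm (expR_ge0 _)) ger0_norm; last first.
  by rewrite addr_ge0 ?expR_ge0 // mulr_ge0 ?expR_ge0 //; lra.
have [y1|y1] := leP 1 y.
- have : expR (y * z) <= y * expR (y * z) by rewrite ler_peMl ?expR_ge0.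
  have := expR_ge0 `|z|; lra.
- have : expR (y * z) <= expR `|z|.
    rewrite ler_expR; have := ler_norm z; have := normr_ge0 z.
    have : y * z <= y * `|z| by rewrite ler_pM2l // ler_norm.
    have : y * `|z| <= `|z| by rewrite ler_piMl //; lra.
    lra.
  have : 0 <= y * expR (y * z) by rewrite mulr_ge0 ?expR_ge0 //; lra.
  lra.
Qed.

Definition Ie {R : realType} (mu : {finite_measure set R -> \bar R}) (z : R) : \bar R :=
  (\int[mu]_(y in `]0%R, +oo[) (expR (y * z))%:E)%E.

Lemma hfun0 {R : realType} (mu : {finite_measure set R -> \bar R}) z :
  hfun mu z 0 = fine (Ie mu z).
Proof.
rewrite /hfun /Ie; congr fine; apply: eq_integral => y _.
by rewrite mulr0 mul0r subr0.
Qed.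

Lemma expR_convex {R : realType} (l p q : R) : 0 <= l -> l <= 1 ->
  expR (l * p + (1 - l) * q) <= l * expR p + (1 - l) * expR q.
Proof.
move=> l0 l1; set m := l * p + (1 - l) * q.
have hp : expR p = expR m * expR (p - m) by rewrite -expRD subrKC.
have hq : expR q = expR m * expR (q - m) by rewrite -expRD subrKC.
have e1 := expR_ge1Dx (p - m); have e2 := expR_ge1Dx (q - m).
have m0 := expR_gt0 m.
have h1 : expR m * (1 + (p - m)) <= expR p by rewrite hp ler_pM2l.
have h2 : expR m * (1 + (q - m)) <= expR q by rewrite hq ler_pM2l.
have h3 : l * (expR m * (1 + (p - m))) <= l * expR p by rewrite ler_wpM2l.
have h4 : (1 - l) * (expR m * (1 + (q - m))) <= (1 - l) * expR q by rewrite ler_wpM2l //; lra.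
have : l * (expR m * (1 + (p - m))) + (1 - l) * (expR m * (1 + (q - m))) = expR m.
  by rewrite /m; ring.
lra.
Qed.

Section HS.
Context {R : realType} (mu : {finite_measure set R -> \bar R})
  (Hi : forall z : R, mu.-integrable `]0%R, +oo[ (fun y => (y * expR (y * z))%:E)).

Lemma IeE z : Ie mu z = (hfun mu z 0)%:E.
Proof.
rewrite hfun0 fineK //.
apply: integrable_fin_num; first exact: measurable_itv.
exact: intble_exp.
Qed.

Lemma h_ge0 z : 0 <= hfun mu z 0.
Proof.
rewrite hfun0; apply: fine_ge0; apply: integral_ge0 => y _.
by rewrite lee_fin expR_ge0.
Qed.

Lemma h_mono z1 z2 : z1 <= z2 -> hfun mu z1 0 <= hfun mu z2 0.
Proof.
move=> z12; rewrite -lee_fin -(IeE z1) -(IeE z2) /Ie.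
apply: ge0_le_integral => //; try exact: mexp.
move=> y /=; rewrite in_itv /= andbT => y0.
by rewrite lee_fin ler_expR ler_pM2l.
Qed.

Lemma h_logconv a b l : 0 < l -> l < 1 -> 0 < hfun mu a 0 -> 0 < hfun mu b 0 ->
  hfun mu (l * a + (1 - l) * b) 0 <=
  expR (l * ln (hfun mu a 0) + (1 - l) * ln (hfun mu b 0)).
Proof.
move=> l0 l1 A0 B0.
set A := hfun mu a 0 in A0 *; set B := hfun mu b 0 in B0 *.
set C := expR (l * ln A + (1 - l) * ln B).
have C0 : 0 < C := expR_gt0 _.
set k1 := C * l / A; set k2 := C * (1 - l) / B.
have k10 : 0 <= k1 by rewrite /k1; apply: divr_ge0; [apply: mulr_ge0|]; lra.
have k20 : 0 <= k2 by rewrite /k2; apply: divr_ge0; [apply: mulr_ge0|]; lra.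
have An : A != 0 by rewrite gt_eqF.
have Bn : B != 0 by rewrite gt_eqF.
have pw : forall y, expR (y * (l * a + (1 - l) * b)) <=
    k1 * expR (y * a) + k2 * expR (y * b).
  move=> y.
  set p := y * a - ln A; set q := y * b - ln B.
  have E : y * (l * a + (1 - l) * b) = (l * p + (1 - l) * q) + (l * ln A + (1 - l) * ln B).
    by rewrite /p /q; ring.
  rewrite E expRD -/C.
  have ep : expR p = expR (y * a) / A by rewrite /p expRD expRN lnK // posrE.
  have eq' : expR q = expR (y * b) / B by rewrite /q expRD expRN lnK // posrE.
  have := expR_convex l p q (ltW l0) (ltW l1).
  rewrite ep eq' => H.
  have -> : k1 * expR (y * a) + k2 * expR (y * b) = (l * (expR (y * a) / A) + (1 - l) * (expR (y * b) / B)) * C.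
    rewrite /k1 /k2; move: (expR (y * a)) (expR (y * b)) => ea eb.
    by field; rewrite An Bn.
  by rewrite ler_pM2r.
have HI : (Ie mu (l * a + (1 - l) * b) <= \int[mu]_(y in `]0%R, +oo[) (k1%:E * (expR (y * a))%:E + k2%:E * (expR (y * b))%:E))%E.
  apply: ge0_le_integral => //; try exact: mexp.
  - by apply: emeasurable_funD; apply: emeasurable_funM => //; exact: mexp.
  - by move=> y _; rewrite -!EFinM -EFinD lee_fin.
rewrite ge0_integralD // in HI; try (by move=> y _; rewrite -EFinM lee_fin mulr_ge0 ?expR_ge0);
  try (by apply: emeasurable_funM => //; exact: mexp).
rewrite !ge0_integralZl // in HI; try exact: mexp; try (by move=> y _; rewrite lee_fin expR_ge0).
rewrite -/(Ie mu a) -/(Ie mu b) !IeE -/A -/B -!EFinM -EFinD lee_fin in HI.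
have -> : C = k1 * A + k2 * B by rewrite /k1 /k2; field; rewrite An Bn.
exact: HI.
Qed.

End HS.

Lemma concave_from {R : realType} {g H : R -> R} :
  (forall z, 0 < H z) -> (forall s, H (g s) = expR s) ->
  (forall z1 z2, z1 < z2 -> H z1 < H z2) ->
  (forall a b l, 0 < l -> l < 1 -> H (l * a + (1 - l) * b) <=
      expR (l * ln (H a) + (1 - l) * ln (H b))) ->
  concaveC g.
Proof.
move=> Hpos G1 Hs Hlc s t w st tw.
set l := (w - t) / (w - s).
have ws : w - s != 0 by rewrite subr_eq0 gt_eqF // (lt_trans st tw).
have l0 : 0 < l by rewrite /l divr_gt0 //; lra.
have l1 : l < 1 by rewrite /l ltr_pdivrMr; lra.
have Hh := Hlc (g s) (g w) l l0 l1.
rewrite !G1 !expRK in Hh.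
have e : l * s + (1 - l) * w = t by rewrite /l; field.
rewrite e -(G1 t) in Hh.
have H2 : l * g s + (1 - l) * g w <= g t.
  by rewrite leNgt; apply/negP => H3; have := Hs _ _ H3; rewrite ltNge Hh.
have : (w - s) * (l * g s + (1 - l) * g w) <= (w - s) * g t by rewrite ler_pM2l //; lra.
have -> : (w - s) * (l * g s + (1 - l) * g w) = (w - t) * g s + (t - s) * g w.
  by rewrite /l; field.
by [].
Qed.

Lemma g_props (R : realType) (mu : {finite_measure set R -> \bar R})
  (u : R -> R -> R)
  (mu_int : forall z : R,
      mu.-integrable `]0%R, +oo[ (fun y => (y * expR (y * z))%:E))
  (u_dx : forall x t : R, 0 < x -> 0 <= t -> derivable (fun x' => u x' t) x 1)
  (u_conc : forall t : R, 0 <= t -> strictly_concave_on_pos (fun x => u x t))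
  (u_h : forall z t : R, 0 <= t -> ux u (hfun mu z t) t = expR (- z + t / 2))
  (u0'_pos : forall x : R, 0 < x -> 0 < u0' u x) :
  concaveC (fun s => - ln (u0' u (expR s))) /\
  (forall s1 s2, s1 <= s2 -> - ln (u0' u (expR s1)) <= - ln (u0' u (expR s2))).
Proof.
have Hs0 : strictly_concave_on_pos (fun x => u x 0) := u_conc 0 (lexx 0).
have Hd0 : forall x, 0 < x -> derivable (fun x' => u x' 0) x 1 :=
  fun x hx => u_dx x 0 hx (lexx 0).
have F1 : forall x1 x2, 0 < x1 -> x1 < x2 -> u0' u x2 < u0' u x1 :=
  der_strict_decr (fun x => u x 0) Hs0 Hd0.
have F1' : forall x1 x2, 0 < x1 -> x1 <= x2 -> u0' u x2 <= u0' u x1.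
  move=> x1 x2 x0; rewrite le_eqVlt => /orP[/eqP->//|lt]; exact/ltW/F1.
have finj : forall x y, 0 < x -> 0 < y -> u0' u x = u0' u y -> x = y.
  move=> x y x0 y0 E; have [xy|yx|//] := ltgtP x y.
  - by have := F1 x y x0 xy; rewrite E ltxx.
  - by have := F1 y x y0 yx; rewrite E ltxx.
set h := fun z => hfun mu z 0.
have F2 : forall z, u0' u (h z) = expR (- z).
  by move=> z; rewrite /u0' /h u_h // mul0r addr0.
have hpos : forall z, 0 < h z.
  move=> z; have := h_ge0 mu z; rewrite le_eqVlt => /orP[/eqP E|//].
  have h1 := h_ge0 mu (z - 1).
  have h2 := h_mono mu mu_int (z - 1) z ltac:(lra).
  have E1 : h (z - 1) = 0 by rewrite /h; lra.
  have := F2 z; have := F2 (z - 1); rewrite E1 /h -E => ->.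
  move/(congr1 (@ln R)); rewrite !expRK; lra.
set f := u0' u.
have fpos : forall s, 0 < f (expR s) by move=> s; apply: u0'_pos; exact: expR_gt0.
set g := fun s => - ln (f (expR s)).
suff: concaveC g /\ (forall s1 s2, s1 <= s2 -> g s1 <= g s2) by [].
have fg : forall s, f (expR s) = expR (- g s).
  by move=> s; rewrite /g opprK lnK // posrE.
have G1 : forall s, h (g s) = expR s.
  move=> s; apply: finj; [exact: hpos|exact: expR_gt0|].
  by rewrite F2 -fg.
have hstrict : forall z1 z2, z1 < z2 -> h z1 < h z2.
  move=> z1 z2 z12; rewrite ltNge; apply/negP => H.
  have := F1' _ _ (hpos z2) H; rewrite !F2 ler_expR; lra.
have G1' : forall s, hfun mu (g s) 0 = expR s := G1.
have hs' : forall z1 z2, z1 < z2 -> hfun mu z1 0 < hfun mu z2 0 := hstrict.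
have hpos' : forall z, 0 < hfun mu z 0 := hpos.
clearbody h.
have Hc : concaveC g.
  apply: (concave_from (H := fun z => hfun mu z 0)) => //.
  move=> a b l l0 l1; exact: h_logconv.
have Hm : forall s1 s2, s1 <= s2 -> g s1 <= g s2.
  move=> s1 s2 s12; rewrite /g lerN2 ler_ln ?posrE //.
  by apply: F1'; [exact: expR_gt0| rewrite ler_expR].
by split.
Qed.

Theorem lemma5 (R : realType) (mu : {finite_measure set R -> \bar R})
  (u : R -> R -> R) (gamma : R)
  (mu_supp : mu [set y : R | y <= 0] = 0%E)
  (mu_nz : mu setT != 0%E)
  (mu_int : forall z : R,
      mu.-integrable `]0%R, +oo[ (fun y => (y * expR (y * z))%:E))
  (u_dx : forall x t : R, 0 < x -> 0 <= t -> derivable (fun x' => u x' t) x 1)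
  (u_dxx : forall x t : R, 0 < x -> 0 <= t -> derivable (fun x' => ux u x' t) x 1)
  (u_dt : forall x t : R, 0 < x -> 0 < t -> derivable (fun t' => u x t') t 1)
  (u_incr : forall t : R, 0 <= t -> strictly_increasing_on_pos (fun x => u x t))
  (u_conc : forall t : R, 0 <= t -> strictly_concave_on_pos (fun x => u x t))
  (u_pde : forall x t : R, 0 < x -> 0 < t ->
      ut u x t = (ux u x t) ^+ 2 / (2 * uxx u x t))
  (u_h : forall z t : R, 0 <= t -> ux u (hfun mu z t) t = expR (- z + t / 2))
  (u0'_pos : forall x : R, 0 < x -> 0 < u0' u x)
  (gamma_lt1 : gamma < 1) (gamma_nz : gamma != 0) :
  ((forall g' : R, gamma < g' -> g' < 1 ->
       (u0' u x / x `^ (g' - 1)) @[x --> +oo] --> 0)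
   /\ (forall g'' : R, g'' < gamma ->
       (u0' u x / x `^ (g'' - 1)) @[x --> +oo] --> +oo))
  <->
  (forall k : R, 0 < k ->
       (u0' u (k * x) / u0' u x) @[x --> +oo] --> k `^ (gamma - 1)).
Proof.
have [Hc Hm] := @g_props R mu u mu_int u_dx u_conc u_h u0'_pos.
clear mu_supp mu_nz u_pde u_dxx u_dt u_incr u_h u_conc u_dx mu_int.
set g := fun s => - ln (u0' u (expR s)) in Hc Hm.
have fg : forall s, u0' u (expR s) = expR (- g s).
  by move=> s; rewrite /g opprK lnK // posrE; apply: u0'_pos; exact: expR_gt0.
have {Hm}Hm : forall s1 s2, s1 <= s2 -> g s1 <= g s2 := Hm.
have {Hc}Hc : concaveC g := Hc.
clearbody g.
set a := 1 - gamma.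
have a0 : 0 < a by rewrite /a; lra.
have Q1 : forall g' s, u0' u (expR s) / expR s `^ (g' - 1) = expR ((1 - g') * s - g s).
  move=> g' s; rewrite fg -expRM -expRN -expRD; congr expR; ring.
have Q2 : forall c s, u0' u (expR c * expR s) / u0' u (expR s) = expR (- (g (s + c) - g s)).
  move=> c s; rewrite -expRD (addrC c s) !fg -expRN -expRD; congr expR; ring.
have Q3 : forall c, expR c `^ (gamma - 1) = expR (- (a * c)).
  move=> c; rewrite -expRM; congr expR; rewrite /a; ring.
split.
- case=> HA1 HA2.
  have HA1' : forall b, 0 < b -> b < a -> (b * s - g s) @[s --> +oo] --> -oo.
    move=> b b0 ba; apply/L2.
    have := HA1 (1 - b) ltac:(rewrite /a in ba; lra) ltac:(lra).
    move/L1.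
    have -> : (fun s => u0' u (expR s) / expR s `^ (1 - b - 1)) = (fun s => expR (b * s - g s)).
      by apply: funext => s; rewrite Q1; congr expR; congr (_ * _ - _); ring.
    by [].
  have HA2' : forall b, a < b -> (b * s - g s) @[s --> +oo] --> +oo.
    move=> b ba; apply/L3.
    have := HA2 (1 - b) ltac:(rewrite /a in ba; lra).
    move/L1.
    have -> : (fun s => u0' u (expR s) / expR s `^ (1 - b - 1)) = (fun s => expR (b * s - g s)).
      by apply: funext => s; rewrite Q1; congr expR; congr (_ * _ - _); ring.
    by [].
  have HB' := AB Hc Hm a0 HA1' HA2'.
  move=> k k0; apply/L1.
  have ek : k = expR (ln k) by rewrite lnK // posrE.
  rewrite ek; set c := ln k.
  have -> : (fun s => u0' u (expR c * expR s) / u0' u (expR s)) = (fun s => expR (- (g (s + c) - g s))).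
    by apply: funext => s; rewrite Q2.
  rewrite Q3; apply/L4; exact: cvgN (HB' c).
- move=> HB.
  have HB1 : (g (s + 1) - g s) @[s --> +oo] --> a.
    have := HB (expR 1) (expR_gt0 1); move/L1.
    have -> : (fun s => u0' u (expR 1 * expR s) / u0' u (expR s)) = (fun s => expR (- (g (s + 1) - g s))).
      by apply: funext => s; rewrite Q2.
    rewrite Q3 mulr1 => /L4 H.
    have -> : (fun s => g (s + 1) - g s) = (fun s => - (- (g (s + 1) - g s))).
      by apply: funext => s; rewrite opprK.
    rewrite -[a]opprK; exact: cvgN H.
  split.
  + move=> g' g1 g2; apply/L1.
    have -> : (fun s => u0' u (expR s) / expR s `^ (g' - 1)) = (fun s => expR ((1 - g') * s - g s)).
      by apply: funext => s; rewrite Q1.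
    apply/L2; apply: (BA1 Hc HB1); rewrite /a; lra.
  + move=> g'' g1; apply/L1.
    have -> : (fun s => u0' u (expR s) / expR s `^ (g'' - 1)) = (fun s => expR ((1 - g'') * s - g s)).
      by apply: funext => s; rewrite Q1.
    apply/L3; apply: (BA2 Hc HB1); rewrite /a; lra.
Qed.
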